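(* Let $q=p^a$ with $p$ prime, $\mathcal V=\mathbb F_q$, and let $G=N.L\le{\rm A\Gamma L}(1,q)$, where $N=\{t_y:y\in\mathbb F_q\}$, $t_y:u\mapsto u+y$, is the group of translations and $L\le{\rm \Gamma L}(1,q)$ is transitive on $\mathcal V\setminus\{0\}$. Let $\gamma\subset\mathcal V$ with $|\gamma|=k$, $1\le k\le q-1$, such that $G_\gamma$ is transitive on $\gamma\times(\mathcal V\setminus\gamma)$. Let $A$ be the group of maps $u\mapsto uz$ ($z\in\mathbb F_q^\times$), let $M=G_\gamma\cap N=\{t_y:y\in Y\}$, and let $K=\mathbb F_p[G_\gamma\cap A]$ be the subfield of $\mathbb F_q$ generated by the scalars $z$ with $(u\mapsto uz)\in G_\gamma$. If $M\ne1$, then $M$ is a $K$-vector space (that is, $Y$ is closed under addition and under multiplication by elements of $K$) and $K$ is a proper subfield of $\mathbb F_q$. *)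

(* Defs.v *)
(* V = F_q is modelled by an arbitrary finite field F
   (every finite field is F_q with q = p^a, p = char F prime). *)
From HB Require Import structures.
From mathcomp Require Import all_boot all_order all_algebra all_fingroup all_solvable all_field.
Set Implicit Arguments. Unset Strict Implicit. Unset Printing Implicit Defensive.
Import GRing.Theory.
Local Open Scope ring_scope.

Section Defs.
Variable F : finFieldType.

Definition translations : {set {perm F}} :=
  [set g : {perm F} | [exists y : F, [forall u : F, g u == u + y]]].

Definition scalars : {set {perm F}} :=
  [set g : {perm F} | [exists z : F, (z != 0) && [forall u : F, g u == u * z]]].

(* g in GammaL(1,q): u |-> a * sigma(u), a <> 0, sigma a field automorphism
   (a ring endomorphism of a finite field is an automorphism). *)
Definition in_GammaL1 (g : {perm F}) : Prop :=
  exists a : F, a != 0 /\ exists s : {rmorphism F -> F}, forall u, g u = a * s u.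

Definition transl_vectors (H : {set {perm F}}) : {set F} :=
  [set y : F | [exists g in H, [forall u : F, g u == u + y]]].

Definition scalar_values (H : {set {perm F}}) : {set F} :=
  [set z : F | [exists g in H, (z != 0) && [forall u : F, g u == u * z]]].

Definition is_subfield (S : {set F}) : bool :=
  [&& (0 : F) \in S, (1 : F) \in S,
      [forall x in S, forall y in S, (x - y \in S) && (x * y \in S)] &
      [forall x in S, x^-1 \in S]].

Definition gen_subfield (Z : {set F}) : {set F} :=
  [set x : F | [forall S : {set F}, (is_subfield S && (Z \subset S)) ==> (x \in S)]].

End Defs.

(* Main.v *)
Require Import Defs.
From HB Require Import structures.
From mathcomp Require Import all_boot all_order all_algebra all_fingroup all_solvable all_field.
Import GRing.Theory.
Local Open Scope ring_scope.

Section Aux.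
Variable F : finFieldType.
Variable H : {group {perm F}}.

Lemma tvP y : reflect (exists2 g, g \in H & forall u, g u = u + y) (y \in transl_vectors H).
Proof.
rewrite inE; apply: (iffP existsP) => [[g /andP[gH /forallP e]]|[g gH e]].
  by exists g => // u; apply/eqP.
by exists g; rewrite gH; apply/forallP => u; rewrite e.
Qed.

Lemma tv0 : (0 : F) \in transl_vectors H.
Proof. by apply/tvP; exists 1%g => // u; rewrite perm1 addr0. Qed.

Lemma tvD y1 y2 : y1 \in transl_vectors H -> y2 \in transl_vectors H ->
  y1 + y2 \in transl_vectors H.
Proof.
move=> /tvP[g1 g1H e1] /tvP[g2 g2H e2]; apply/tvP; exists (g1 * g2)%g.
  exact: groupM.
by move=> u; rewrite permM e2 e1 addrA.
Qed.

Lemma tvN y : y \in transl_vectors H -> - y \in transl_vectors H.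
Proof.
move=> /tvP[g gH e]; apply/tvP; exists (g^-1)%g; first by rewrite groupV.
move=> u; apply: (@perm_inj _ g); rewrite permKV e; by rewrite subrK.
Qed.

Lemma tvZ z y : z \in scalar_values H -> y \in transl_vectors H ->
  z * y \in transl_vectors H.
Proof.
rewrite inE => /existsP[h /and3P[hH z0 /forallP eh]] /tvP[g gH e].
apply/tvP; exists (h^-1 * g * h)%g; first by rewrite !groupM ?groupV.
move=> u; rewrite !permM e (eqP (eh _)).
have -> : h^-1%g u = u / z.
  apply: (@perm_inj _ h); rewrite permKV (eqP (eh _)) divfK //.
by rewrite mulrDl divfK // mulrC.
Qed.

Definition Sset := [set c : F | [forall y in transl_vectors H, c * y \in transl_vectors H]].

Lemma SsetP c : reflect (forall y, y \in transl_vectors H -> c * y \in transl_vectors H)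
  (c \in Sset).
Proof.
rewrite inE; apply: (iffP forallP) => [h y yY|h y].
  by have := h y; rewrite yY.
by apply/implyP; apply: h.
Qed.

Lemma Sset_sub : is_subfield Sset.
Proof.
apply/and4P; split.
- by apply/SsetP => y _; rewrite mul0r tv0.
- by apply/SsetP => y yY; rewrite mul1r.
- apply/forallP => x; apply/implyP => /SsetP xS; apply/forallP => w;
  apply/implyP => /SsetP wS; apply/andP; split; apply/SsetP => y yY.
    by rewrite mulrBl tvD ?tvN ?xS ?wS.
  by rewrite -mulrA xS ?wS.
- apply/forallP => x; apply/implyP => /SsetP xS.
  have [->|x0] := eqVneq x 0; first by rewrite invr0; apply/SsetP => y _; rewrite mul0r tv0.
  apply/SsetP => y yY.
  have sub : [set x * w | w in transl_vectors H] \subset transl_vectors H.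
    by apply/subsetP => w /imsetP[w' w'Y ->]; apply: xS.
  have : [set x * w | w in transl_vectors H] = transl_vectors H.
    apply/eqP; rewrite eqEcard sub /= card_imset //; exact: mulfI.
  move=> E; have : y \in [set x * w | w in transl_vectors H] by rewrite E.
  case/imsetP => w wY ->.
  by rewrite mulrA mulVf // mul1r.
Qed.

Lemma K_sub c y : c \in gen_subfield (scalar_values H) -> y \in transl_vectors H ->
  c * y \in transl_vectors H.
Proof.
rewrite inE => /forallP /(_ Sset); rewrite Sset_sub /= => /implyP h yY.
have : c \in Sset.
  apply: h; apply/subsetP => z zZ; apply/SsetP => y' y'Y; exact: tvZ.
by move/SsetP; apply.
Qed.

End Aux.

Theorem lemma6p3 (F : finFieldType) (L G : {group {perm F}}) (gamma : {set F})
  (hL : forall g, g \in L -> in_GammaL1 g)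
  (hLtr : forall u v : F, u != 0 -> v != 0 -> exists2 g, g \in L & g u = v)
  (hG : (G :=: translations F * L)%g)
  (hk1 : (1 <= #|gamma|)%N) (hk2 : (#|gamma| <= #|F| - 1)%N)
  (htr : forall a b c d : F, a \in gamma -> b \notin gamma -> c \in gamma -> d \notin gamma ->
      exists2 g, g \in ('N_G(gamma | 'P))%g & g a = c /\ g b = d) :
  let Gg := ('N_G(gamma | 'P))%g in
  let M := (Gg :&: translations F)%g in
  let Y := transl_vectors Gg in
  let K := gen_subfield (scalar_values Gg) in
  M != 1%g ->
  ((0 : F) \in Y /\ (forall y1 y2, y1 \in Y -> y2 \in Y -> y1 + y2 \in Y)
   /\ (forall c y, c \in K -> y \in Y -> c * y \in Y))
  /\ K != [set: F].
Proof.
move=> Gg M Y K M1; rewrite /Y /K /Gg /M in M1 *.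
have GgG : Gg = ('N_G(gamma | 'P))%G by [].
split.
  split; first by apply: tv0.
  split; first by move=> *; apply: tvD.
  by move=> *; apply: K_sub.
apply/negP => /eqP KT.
have [g gM g1] : exists2 g, g \in M & g != 1%g.
  case: (pickP [pred g in ('N_G(gamma | 'P) :&: translations F)%g | g != 1%g]) => [g /andP[]|h].
    by exists g.
  case/negP: M1; rewrite eqEsubset; apply/andP; split.
    apply/subsetP => g gM; have := h g; rewrite /= gM /= => /negbFE /eqP ->.
    by rewrite inE.
  rewrite sub1set !inE group1 /=; apply/andP; split; first by apply/subsetP => x xg; rewrite inE apermE perm1.
  apply/existsP; exists 0; apply/forallP => u.
  by rewrite perm1 addr0.
move: gM; rewrite inE => /andP[gGg]; rewrite inE => /existsP[y /forallP ey].
have y0 : y != 0.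
  apply: contra g1 => /eqP y0; apply/eqP/permP => u; rewrite perm1.
  by rewrite (eqP (ey u)) y0 addr0.
have yY : y \in Y by rewrite inE; apply/existsP; exists g; rewrite gGg; apply/forallP.
have allY w : w \in Y.
  have := @K_sub _ ('N_G(gamma | 'P))%G (w / y) y.
  move=> hK; rewrite -(divfK y0 w); apply: hK => //; by rewrite KT inE.
have [a aG] : exists a, a \in gamma.
  by move: hk1; rewrite card_gt0 => /set0Pn.
have gT : gamma = [set: F].
  apply/setP => u; rewrite inE.
  have /tvP[h hGg eh] := allY (u - a).
  move: hGg; rewrite inE => /andP[_ hN].
  have := astabs_act a hN; rewrite /= apermE eh addrC subrK aG; by move->.
move: hk2; rewrite gT cardsT.
have : (0 < #|F|)%N by apply/card_gt0P; exists 0.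
by case: #|F| => // n _; rewrite subn1 /= ltnn.
Qed.
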